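(* Let $x_1,x_2\in\mathbb{R}$ and $z_1,z_2,v_2\in\mathbb{C}$, and define $g_{\sigma^2}=4|z_1|^2+x_1^2$, $g_{\rho^2}=4|z_2|^2+|v_2|^2+\tfrac13x_2^2$, $g_{\rho\sigma^2}=\tfrac23x_2(x_1^2-2|z_1|^2)+4z_2\bar z_1^2+4\bar z_2z_1^2+2v_2\bar z_1x_1+2\bar v_2z_1x_1$, $g_{\rho^2\sigma^2}=(8|z_2|^2-|v_2|^2-\tfrac23x_2^2)(x_1^2-2|z_1|^2)-12z_2\bar v_2\bar z_1x_1-12\bar z_2v_2z_1x_1+8z_2x_2\bar z_1^2+8\bar z_2x_2z_1^2-2v_2x_2\bar z_1x_1-2\bar v_2x_2z_1x_1-3v_2^2\bar z_1^2-3\bar v_2^2z_1^2$. Then $g_{\sigma^2},g_{\rho^2}\ge0$, and whenever $g_{\sigma^2}g_{\rho^2}\neq0$, $$-\sqrt2\le\frac{g_{\rho\sigma^2}}{\sqrt{g_{\rho^2}}\,g_{\sigma^2}}\le\sqrt2,\qquad -\sqrt{\tfrac75}\,(\sqrt{15}-1)\le\frac{g_{\rho^2\sigma^2}}{g_{\rho^2}g_{\sigma^2}}\le\sqrt{\tfrac75}\,(\sqrt{15}+1).$$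
   Context: These are the $SU(2)$-invariants of a pair of real multiplets $\eta^{(2)}(\zeta)=\frac{\bar z_1}{\zeta}+x_1-z_1\zeta$ and $\eta^{(4)}(\zeta)=\frac{\bar z_2}{\zeta^2}+\frac{\bar v_2}{\zeta}+x_2-v_2\zeta+z_2\zeta^2$. *)

(* Defs.v *)
From HB Require Import structures.
From mathcomp Require Import all_boot all_order all_algebra.
From mathcomp Require Import complex.
Set Implicit Arguments. Unset Strict Implicit. Unset Printing Implicit Defensive.
Import Order.TTheory GRing.Theory Num.Theory.
Local Open Scope ring_scope.
Local Open Scope complex_scope.

Section Invariants.
Variable R : rcfType.
Local Notation C := R[i].

Definition g_sigma2 (x1 : R) (z1 : C) : C :=
  4 * (z1 * z1^*) + x1%:C ^+ 2.

Definition g_rho2 (x2 : R) (z2 v2 : C) : C :=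
  4 * (z2 * z2^*) + v2 * v2^* + 3^-1 * x2%:C ^+ 2.

Definition g_rhosigma2 (x1 x2 : R) (z1 z2 v2 : C) : C :=
  2 / 3 * x2%:C * (x1%:C ^+ 2 - 2 * (z1 * z1^*))
  + 4 * z2 * z1^* ^+ 2 + 4 * z2^* * z1 ^+ 2
  + 2 * v2 * z1^* * x1%:C + 2 * v2^* * z1 * x1%:C.

Definition g_rho2sigma2 (x1 x2 : R) (z1 z2 v2 : C) : C :=
  (8 * (z2 * z2^*) - v2 * v2^* - 2 / 3 * x2%:C ^+ 2)
    * (x1%:C ^+ 2 - 2 * (z1 * z1^*))
  - 12 * z2 * v2^* * z1^* * x1%:C - 12 * z2^* * v2 * z1 * x1%:C
  + 8 * z2 * x2%:C * z1^* ^+ 2 + 8 * z2^* * x2%:C * z1 ^+ 2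
  - 2 * v2 * x2%:C * z1^* * x1%:C - 2 * v2^* * x2%:C * z1 * x1%:C
  - 3 * v2 ^+ 2 * z1^* ^+ 2 - 3 * v2^* ^+ 2 * z1 ^+ 2.
End Invariants.

(* Main.v *)
Require Import Defs.
From HB Require Import structures.
From mathcomp Require Import all_boot all_order all_algebra.
From mathcomp Require Import complex.
From mathcomp Require Import ring lra.
Import Order.TTheory GRing.Theory Num.Theory.
Local Open Scope ring_scope.
Local Open Scope complex_scope.
Section S.
Variable R : rcfType.
Local Notation C := R[i].
Lemma cx (x : R) : (x%:C)^*%R = x%:C :> C.
Proof. exact: conjc_real. Qed.
Lemma cn (n : nat) : ((n%:R : R)%:C) = n%:R :> C.
Proof. exact: (rmorph_nat (real_complex R)). Qed.

Definition TT (di dj : R) (ui wj uj wi : C) : C :=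
  di%:C * ui * wj^*%R - dj%:C * uj * wi^*%R.
Definition tt (di dj : R) (ui wj uj wi : C) : C :=
  TT di dj ui wj uj wi * (TT di dj ui wj uj wi)^*%R / (di%:C * dj%:C).

Lemma tt_ge0 di dj ui wj uj wi : 0 < di -> 0 < dj -> 0 <= tt di dj ui wj uj wi.
Proof.
move=> hi hj; rewrite /tt divr_ge0 ?mul_conjC_ge0 // mulr_ge0 // ler0c ltW //.
Qed.

Lemma lag5 (d1 d2 d3 d4 d5 : R) (u1 u2 u3 u4 u5 w1 w2 w3 w4 w5 : C) :
  d1%:C != 0 -> d2%:C != 0 -> d3%:C != 0 -> d4%:C != 0 -> d5%:C != 0 ->
  (d1%:C * (u1 * u1^*%R) + d2%:C * (u2 * u2^*%R) + d3%:C * (u3 * u3^*%R)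
   + d4%:C * (u4 * u4^*%R) + d5%:C * (u5 * u5^*%R)) *
  (w1 * w1^*%R / d1%:C + w2 * w2^*%R / d2%:C + w3 * w3^*%R / d3%:C
   + w4 * w4^*%R / d4%:C + w5 * w5^*%R / d5%:C)
  - (u1 * w1 + u2 * w2 + u3 * w3 + u4 * w4 + u5 * w5)
   * (u1 * w1 + u2 * w2 + u3 * w3 + u4 * w4 + u5 * w5)^*%R
  = tt d1 d2 u1 w2 u2 w1 + tt d1 d3 u1 w3 u3 w1 + tt d1 d4 u1 w4 u4 w1
  + tt d1 d5 u1 w5 u5 w1 + tt d2 d3 u2 w3 u3 w2 + tt d2 d4 u2 w4 u4 w2
  + tt d2 d5 u2 w5 u5 w2 + tt d3 d4 u3 w4 u4 w3 + tt d3 d5 u3 w5 u5 w3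
  + tt d4 d5 u4 w5 u5 w4.
Proof.
move=> h1 h2 h3 h4 h5.
rewrite /tt /TT !(rmorphD, rmorphB, rmorphN, rmorphM) /= !conjCK !cx.
by field; rewrite ?h1 ?h2 ?h3 ?h4 ?h5.
Qed.

Lemma W1 (x1 x2 : R) (z1 z2 v2 : C) :
  let X1 := x1%:C in let X2 := x2%:C in
  let r0 := -12 * z1 * z2^*%R - 3 * X1 * v2^*%R + 2 * z1^*%R * X2 in
  let r1 := 3 * z1 * v2^*%R + 2 * X1 * X2 + 3 * z1^*%R * v2 in
  3 * (2 * g_rho2 x2 z2 v2 * g_sigma2 x1 z1 - g_rho2sigma2 x1 x2 z1 z2 v2)
  = r0 * r0^*%R + r1 * r1^*%R.
Proof.
move=> X1 X2 r0 r1.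
rewrite /r0 /r1 !(rmorphD, rmorphB, rmorphN, rmorphM, rmorph1) /= !conjCK !cx.
rewrite /g_sigma2 /g_rho2 /g_rho2sigma2 /X1 /X2.
by field.
Qed.

Lemma W2 (x1 x2 : R) (z1 z2 v2 : C) :
  let X1 := x1%:C in let X2 := x2%:C in
  let c0 := 2 * z2^*%R * X1 - v2^*%R * z1^*%R in
  let c1 := -4 * z2^*%R * z1 + v2^*%R * X1 - 2 * X2 * z1^*%R in
  let c2 := v2 * z1^*%R - v2^*%R * z1 in
  2 * g_rho2 x2 z2 v2 * g_sigma2 x1 z1 + g_rho2sigma2 x1 x2 z1 z2 v2
  = 4 * (c0 * c0^*%R) + c1 * c1^*%R + 3 * (c2 * c2^*%R).
Proof.
move=> X1 X2 c0 c1 c2.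
rewrite /c0 /c1 /c2 !(rmorphD, rmorphB, rmorphN, rmorphM, rmorph1) /= !conjCK !cx.
rewrite /g_sigma2 /g_rho2 /g_rho2sigma2 /X1 /X2.
by field.
Qed.

Lemma W3 (x1 x2 : R) (z1 z2 v2 : C) :
  0 <= 4 * g_rho2 x2 z2 v2 * g_sigma2 x1 z1 ^+ 2
       - 3 * g_rhosigma2 x1 x2 z1 z2 v2 ^+ 2.
Proof.
set X1 := x1%:C; set X2 := x2%:C.
have n0 : forall n : nat, ((n.+1)%:R : R)%:C != 0.
  by move=> n; rewrite cn pnatr_eq0.
have := @lag5 2 12 12 3 3
  X2 z2 z2^*%R v2 v2^*%R (2/3 * (X1^+2 - 2 * (z1 * z1^*%R)))
  (4 * z1^*%R ^+ 2) (4 * z1 ^+ 2) (2 * z1^*%R * X1) (2 * z1 * X1)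
  (n0 _) (n0 _) (n0 _) (n0 _) (n0 _).
set L := (_ * _ - _ * _) => HL.
have -> : 4 * g_rho2 x2 z2 v2 * g_sigma2 x1 z1 ^+ 2
       - 3 * g_rhosigma2 x1 x2 z1 z2 v2 ^+ 2 = 3 * L.
  rewrite /L !(rmorphD, rmorphB, rmorphN, rmorphM, rmorph1, rmorphXn) /= !conjCK !cx.
  rewrite ?cn /g_sigma2 /g_rho2 /g_rhosigma2 /X1 /X2.
  by field.
rewrite HL mulr_ge0 ?ler0n //.
by rewrite !addr_ge0 // tt_ge0 // ltr0n.
Qed.
End S.


Lemma real_part (R : rcfType) (g p : R) : 0 < p -> 3 * g ^+ 2 <= 4 * p ^+ 2 ->
  - Num.sqrt (2 : R) <= g / p <= Num.sqrt 2.
Proof.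
move=> pp h.
have r0 : 0 <= Num.sqrt (2 : R) by apply: sqrtr_ge0.
have r2 : Num.sqrt (2 : R) ^+ 2 = 2 by rewrite sqr_sqrtr // ler0n.
have q0 : 0 <= Num.sqrt (2 : R) * p by rewrite mulr_ge0 // ltW.
have q2 : (Num.sqrt (2 : R) * p) ^+ 2 = 2 * p ^+ 2 by rewrite exprMn r2.
rewrite ler_pdivlMr // ler_pdivrMr //.
rewrite mulNr.
move: q0 q2; set q := Num.sqrt 2 * p => q0 q2.
apply/andP; split; nra.
Qed.

Lemma consts (R : rcfType) :
  2 <= Num.sqrt (7 / 5 : R) * (Num.sqrt (15 : R) - 1) /\
  2 <= Num.sqrt (7 / 5 : R) * (Num.sqrt (15 : R) + 1).
Proof.
have t0 : 0 <= Num.sqrt (7 / 5 : R) by apply: sqrtr_ge0.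
have s0 : 0 <= Num.sqrt (15 : R) by apply: sqrtr_ge0.
have t2 : Num.sqrt (7 / 5 : R) ^+ 2 = 7 / 5 by rewrite sqr_sqrtr // divr_ge0 ?ler0n.
have s2 : Num.sqrt (15 : R) ^+ 2 = 15 by rewrite sqr_sqrtr // ler0n.
have t1 : 1 <= Num.sqrt (7 / 5 : R) by nra.
have s3 : 3 <= Num.sqrt (15 : R) by nra.
split; nra.
Qed.

Lemma sqC (R : rcfType) (x : R) : 0 <= x%:C ^+ 2 :> R[i].
Proof. by rewrite -(rmorphXn (real_complex R)) ler0c sqr_ge0. Qed.

Lemma polyC (R : rcfType) (p g : R) :
  4 * (p%:C) ^+ 2 - 3 * (g%:C) ^+ 2 = (4 * p ^+ 2 - 3 * g ^+ 2)%:C :> R[i].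
Proof.
rewrite -!(rmorphXn (real_complex R)) -(cn R 4) -(cn R 3).
by rewrite -!(rmorphM (real_complex R)) -(rmorphB (real_complex R)).
Qed.

Theorem mainTheorem2 (R : rcfType) (x1 x2 : R) (z1 z2 v2 : R[i]) :
  let gs := g_sigma2 x1 z1 in
  let gr := g_rho2 x2 z2 v2 in
  let grs := g_rhosigma2 x1 x2 z1 z2 v2 in
  let grrs := g_rho2sigma2 x1 x2 z1 z2 v2 in
  0 <= gs /\ 0 <= gr /\
  (gs * gr != 0 ->
     (- (Num.sqrt (2 : R))%:C <= grs / (sqrtC gr * gs) <= (Num.sqrt (2 : R))%:C)
     /\
     (- (Num.sqrt (7 / 5 : R) * (Num.sqrt (15 : R) - 1))%:C
        <= grrs / (gr * gs)
        <= (Num.sqrt (7 / 5 : R) * (Num.sqrt (15 : R) + 1))%:C)).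
Proof.
move=> gs gr grs grrs.
have gs0 : 0 <= gs.
  rewrite /gs /g_sigma2 addr_ge0 ?sqC //.
  by apply: mulr_ge0; rewrite ?ler0n ?mul_conjC_ge0.
have gr0 : 0 <= gr.
  rewrite /gr /g_rho2 addr_ge0 //; first rewrite addr_ge0 ?mul_conjC_ge0 //.
    by apply: mulr_ge0; rewrite ?ler0n ?mul_conjC_ge0.
  by apply: mulr_ge0; rewrite ?invr_ge0 ?ler0n ?sqC.
split=> //; split=> // hnz.
have [gsp grp] : 0 < gs /\ 0 < gr.
  move: hnz; rewrite mulf_eq0 negb_or => /andP[h1 h2].
  by rewrite !lt_def h1 h2 gs0 gr0.
split.
- set s := sqrtC gr.
  have sp : 0 < s by rewrite sqrtC_gt0.
  have Pp : 0 < s * gs by rewrite mulr_gt0.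
  have grs_real : grs \is Num.real.
    rewrite CrealE; apply/eqP.
    rewrite /grs /g_rhosigma2 !(rmorphD, rmorphB, rmorphN, rmorphM, rmorph1, rmorphXn, fmorphV) /=.
    rewrite !conjCK !cx; by field.
  have P_real : s * gs \is Num.real := gtr0_real Pp.
  have H3 := W3 R x1 x2 z1 z2 v2.
  rewrite -/gr -/gs -/grs in H3.
  have e : gr = s ^+ 2 by rewrite sqrtCK.
  have {e} H3' : 0 <= 4 * (s * gs) ^+ 2 - 3 * grs ^+ 2.
    suff -> : 4 * (s * gs) ^+ 2 - 3 * grs ^+ 2 = 4 * gr * gs ^+ 2 - 3 * grs ^+ 2 by [].
    by rewrite e; ring.
  move: Pp P_real H3'; set P := s * gs => Pp P_real H3'.
  case/complex_realP: grs_real => g eg.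
  case/complex_realP: P_real => p ep.
  rewrite eg ep in H3' Pp *.
  rewrite polyC ler0c subr_ge0 in H3'.
  rewrite ltcR in Pp.
  rewrite -fmorph_div -rmorphN !lecR.
  exact: real_part.
- have h1 := W1 R x1 x2 z1 z2 v2.
  have h2 := W2 R x1 x2 z1 z2 v2.
  simpl in h1, h2.
  rewrite -/gr -/gs -/grrs in h1 h2.
  have a1 : 0 <= 2 * gr * gs - grrs.
    have : 0 <= 3 * (2 * gr * gs - grrs) by rewrite h1 addr_ge0 ?mul_conjC_ge0.
    by rewrite pmulr_rge0 ?ltr0n.
  have a2 : 0 <= 2 * gr * gs + grrs.
    rewrite h2 addr_ge0 //; first rewrite addr_ge0 ?mul_conjC_ge0 //.
      by apply: mulr_ge0; rewrite ?ler0n ?mul_conjC_ge0.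
    by apply: mulr_ge0; rewrite ?ler0n ?mul_conjC_ge0.
  have Qp : 0 < gr * gs by rewrite mulr_gt0.
  have [c1 c2] := consts R.
  apply/andP; split.
    apply: (@le_trans _ _ (-2)).
      by rewrite lerN2 -(cn _ 2) lecR.
    rewrite ler_pdivlMr // -subr_ge0.
    by have -> : grrs - -2 * (gr * gs) = 2 * gr * gs + grrs by ring.
  apply: (@le_trans _ _ 2).
    rewrite ler_pdivrMr // -subr_ge0.
    by have -> : 2 * (gr * gs) - grrs = 2 * gr * gs - grrs by ring.
  by rewrite -(cn _ 2) lecR.
Qed.
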